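(* Let $\psi^\beta$ be a smooth surface tensor field with one contravariant surface index on the dynamic surface $\Sigma_t$. Then $$\left(\dot\nabla\nabla_\alpha-\nabla_\alpha\dot\nabla\right)\psi^\beta=\dot R^\beta_{\ \alpha\gamma}\,\psi^\gamma+C\,B^\gamma_\alpha\,\nabla_\gamma\psi^\beta ,$$ where the temporal curvature tensor is $$\dot R^\beta_{\ \alpha\gamma}=\partial_t\Gamma^\beta_{\alpha\gamma}+R^\beta_{\ \gamma\alpha\delta}V^\delta-\nabla_\alpha\dot\Gamma^\beta_\gamma .$$
   Context: Setting: $\Sigma_t$ is a smooth one-parameter family of 2-dimensional surfaces in Euclidean 3-space, given by a position vector $\mathbf R(S^1,S^2,t)$ in surface coordinates $S^\alpha$ (Greek indices run over $1,2$; repeated indices are summed). Put $\mathbf S_\alpha=\partial_\alpha\mathbf R$, $S_{\alpha\beta}=\mathbf S_\alpha\cdot\mathbf S_\beta$, $S^{\alpha\beta}$ the inverse metric (used to raise and lower surface indices), $\mathbf S^\alpha=S^{\alpha\beta}\mathbf S_\beta$, $\mathbf N$ the unit normal, $\Gamma^\gamma_{\alpha\beta}=\mathbf S^\gamma\cdot\partial_\alpha\mathbf S_\beta$ the surface Christoffel symbols, and $\nabla_\alpha$ the surface covariant derivative. The curvature tensor is $B_{\alpha\beta}=\mathbf N\cdot\nabla_\alpha\mathbf S_\beta$, so that $\nabla_\alpha\mathbf S_\beta=\mathbf N B_{\alpha\beta}$ and $B^\alpha_\beta=-\mathbf S^\alpha\cdot\nabla_\beta\mathbf N$. The Riemann tensor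 is defined by $(\nabla_\alpha\nabla_\beta-\nabla_\beta\nabla_\alpha)\psi^\gamma=R^\gamma_{\ \delta\alpha\beta}\psi^\delta$. Velocity: $\mathbf V=\partial_t\mathbf R$ (at fixed $S^\alpha$), normal velocity $C=\mathbf V\cdot\mathbf N$, tangential components $V^\alpha=\mathbf V\cdot\mathbf S^\alpha$, so $\mathbf V=C\mathbf N+V^\alpha\mathbf S_\alpha$. The Christoffel time symbol is $\dot\Gamma^\alpha_\beta=\nabla_\beta V^\alpha-C B^\alpha_\beta$. The invariant (tensorial) time derivative $\dot\nabla$ is defined on scalars by $\dot\nabla\psi=\partial_t\psi-V^\alpha\nabla_\alpha\psi$, on surface tensors by $\dot\nabla\psi^\alpha=\partial_t\psi^\alpha-V^\gamma\nabla_\gamma\psi^\alpha+\dot\Gamma^\alpha_\gamma\psi^\gamma$, $\dot\nabla\psi_\alpha=\partial_t\psi_\alpha-V^\gamma\nabla_\gamma\psi_\alpha-\dot\Gamma^\gamma_\alpha\psi_\gamma$ (one such term per index for higher rank), and on vector-valued fields in Euclidean space componentwise in Cartesian coordinates in the same way (e.g. $\dot\nabla\mathbf S_\alpha=\partial_t\mathbf S_\alpha-V^\gamma\nabla_\gamma\mathbf S_\alpha-\dot\Gamma^\gamma_\alpha\mathbf S_\gamma$). In the formula for $\dot R$, $\nabla_\alpha\dot\Gamma^\beta_\gamma$ is computed with the covariant derivative rule for an object with one upper and one lower surface index. *)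

(* Defs.v *)
From Stdlib Require Import Reals ClassicalEpsilon List.
Open Scope R_scope.

(* Scalar fields of the three parameters (S^1, S^2, t).  Directions:
   0 = S^1, 1 = S^2, 2 = t.  Surface indices alpha range over {0,1}
   (the paper's 1,2); Cartesian indices i range over {0,1,2}. *)
Definition F3 := R -> R -> R -> R.

Definition line (d : nat) (f : F3) (a b c : R) : R -> R :=
  match d with
  | O => fun x => f x b c
  | S O => fun x => f a x c
  | _ => fun x => f a b x
  end.

Definition coord (d : nat) (a b c : R) : R :=
  match d with O => a | S O => b | _ => c end.

(* the derivative of g at x (an arbitrary value if g is not differentiable there) *)
Definition deriv1 (g : R -> R) (x : R) : R :=
  epsilon (inhabits 0) (fun l => derivable_pt_lim g x l).

Definition pd (d : nat) (f : F3) : F3 :=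
  fun a b c => deriv1 (line d f a b c) (coord d a b c).

Definition has_pd (d : nat) (f : F3) (a b c : R) : Prop :=
  exists l, derivable_pt_lim (line d f a b c) (coord d a b c) l.

Fixpoint iter_pd (ds : list nat) (f : F3) : F3 :=
  match ds with nil => f | d :: ds' => pd d (iter_pd ds' f) end.

Definition cont3_at (f : F3) (a b c : R) : Prop :=
  forall eps, 0 < eps -> exists del, 0 < del /\
    forall x y z, Rabs (x - a) < del -> Rabs (y - b) < del -> Rabs (z - c) < del ->
      Rabs (f x y z - f a b c) < eps.

Definition open3 (U : R -> R -> R -> Prop) : Prop :=
  forall a b c, U a b c -> exists del, 0 < del /\
    forall x y z, Rabs (x - a) < del -> Rabs (y - b) < del -> Rabs (z - c) < del ->
      U x y z.

Definition smooth_on (U : R -> R -> R -> Prop) (f : F3) : Prop :=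
  forall ds : list nat, forall a b c, U a b c ->
    cont3_at (iter_pd ds f) a b c /\
    (forall d, (d < 3)%nat -> has_pd d (iter_pd ds f) a b c).

Definition sum2 (f : nat -> R) : R := f 0%nat + f 1%nat.
Definition sum3 (f : nat -> R) : R := f 0%nat + f 1%nat + f 2%nat.

Section Geometry.
(* X i = i-th Cartesian component of the position vector R(S^1,S^2,t) *)
Variable X : nat -> F3.

Definition Sv (al i : nat) : F3 := pd al (X i).
Definition met (al be : nat) : F3 :=
  fun a b c => sum3 (fun i => Sv al i a b c * Sv be i a b c).
Definition metdet : F3 :=
  fun a b c => met 0 0 a b c * met 1 1 a b c - met 0 1 a b c * met 1 0 a b c.
(* S^{alpha beta}: inverse of the 2x2 metric *)
Definition imet (al be : nat) : F3 :=
  fun a b c =>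
    (if Nat.eqb al be then met (1 - al) (1 - al) a b c else - met al be a b c)
    / metdet a b c.
Definition Sup (al i : nat) : F3 :=
  fun a b c => sum2 (fun be => imet al be a b c * Sv be i a b c).

Definition cross (u v : nat -> R) (i : nat) : R :=
  match i with
  | O => u 1%nat * v 2%nat - u 2%nat * v 1%nat
  | S O => u 2%nat * v 0%nat - u 0%nat * v 2%nat
  | _ => u 0%nat * v 1%nat - u 1%nat * v 0%nat
  end.
Definition crossS (i : nat) : F3 :=
  fun a b c => cross (fun j => Sv 0 j a b c) (fun j => Sv 1 j a b c) i.
Definition Nv (i : nat) : F3 :=
  fun a b c => crossS i a b c / sqrt (sum3 (fun j => crossS j a b c ^ 2)).

(* Christoffel symbols: Chr ga al be = Gamma^ga_{al be} = S^ga . d_al S_be *)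
Definition Chr (ga al be : nat) : F3 :=
  fun a b c => sum3 (fun i => Sup ga i a b c * pd al (Sv be i) a b c).

(* covariant derivatives; w al denotes w^al (covU) or w_al (covL),
   T be ga denotes T^be_ga *)
Definition covU (w : nat -> F3) (al be : nat) : F3 :=
  fun a b c => pd al (w be) a b c + sum2 (fun ga => Chr be al ga a b c * w ga a b c).
Definition covL (w : nat -> F3) (al be : nat) : F3 :=
  fun a b c => pd al (w be) a b c - sum2 (fun ga => Chr ga al be a b c * w ga a b c).
Definition cov11 (T : nat -> nat -> F3) (al be ga : nat) : F3 :=
  fun a b c => pd al (T be ga) a b c
    + sum2 (fun de => Chr be al de a b c * T de ga a b c)
    - sum2 (fun de => Chr de al ga a b c * T be de a b c).

(* B^al_be = - S^al . nabla_be N  (N carries no surface index: nabla_be N = d_be N) *)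
Definition Bmix (al be : nat) : F3 :=
  fun a b c => - sum3 (fun i => Sup al i a b c * pd be (Nv i) a b c).

Definition Vel (i : nat) : F3 := pd 2 (X i).
Definition Cn : F3 := fun a b c => sum3 (fun i => Vel i a b c * Nv i a b c).
Definition Vup (al : nat) : F3 := fun a b c => sum3 (fun i => Vel i a b c * Sup al i a b c).

Definition dotChr (al be : nat) : F3 :=
  fun a b c => covU Vup be al a b c - Cn a b c * Bmix al be a b c.

(* Riemann tensor R^ga_{de al be} (the coordinate expression of
   (nabla_al nabla_be - nabla_be nabla_al) psi^ga = R^ga_{de al be} psi^de) *)
Definition Riem (ga de al be : nat) : F3 :=
  fun a b c => pd al (Chr ga be de) a b c - pd be (Chr ga al de) a b c
    + sum2 (fun om => Chr ga al om a b c * Chr om be de a b c)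
    - sum2 (fun om => Chr ga be om a b c * Chr om al de a b c).

Definition dotnabU (w : nat -> F3) (be : nat) : F3 :=
  fun a b c => pd 2 (w be) a b c
    - sum2 (fun ga => Vup ga a b c * covU w ga be a b c)
    + sum2 (fun ga => dotChr be ga a b c * w ga a b c).

Definition dotnab11 (T : nat -> nat -> F3) (be al : nat) : F3 :=
  fun a b c => pd 2 (T be al) a b c
    - sum2 (fun ga => Vup ga a b c * cov11 T ga be al a b c)
    + sum2 (fun ga => dotChr be ga a b c * T ga al a b c)
    - sum2 (fun ga => dotChr ga al a b c * T be ga a b c).

Definition nablaPsi (psi : nat -> F3) (be al : nat) : F3 := covU psi al be.

Definition dotR (be al ga : nat) : F3 :=
  fun a b c => pd 2 (Chr be al ga) a b c
    + sum2 (fun de => Riem be ga al de a b c * Vup de a b c)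
    - cov11 dotChr al be ga a b c.

End Geometry.

(* Main.v *)
Require Import Defs.
From Stdlib Require Import Reals ClassicalEpsilon Lra Lia.
From Coquelicot Require Coquelicot.
Open Scope R_scope.

Lemma deriv1_eq g x l : derivable_pt_lim g x l -> deriv1 g x = l.
Proof.
  intro H. unfold deriv1.
  assert (E := epsilon_spec (inhabits 0) (fun l => derivable_pt_lim g x l) (ex_intro _ l H)).
  eapply uniqueness_limite; eauto.
Qed.

Lemma dpl_local (f1 f2 : R -> R) x0 l del : 0 < del ->
  (forall x, Rabs (x - x0) < del -> f1 x = f2 x) ->
  derivable_pt_lim f1 x0 l -> derivable_pt_lim f2 x0 l.
Proof.
  intros Hd E H eps Heps. destruct (H eps Heps) as [d Hd'].
  assert (Hm : 0 < Rmin d del) by (apply Rmin_pos; [apply cond_pos|lra]).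
  exists (mkposreal _ Hm). simpl. intros h hn hl.
  rewrite <- (E (x0 + h)), <- (E x0).
  - apply Hd'; auto. apply Rlt_le_trans with (1 := hl); apply Rmin_l.
  - replace (x0 - x0) with 0 by ring; rewrite Rabs_R0; lra.
  - replace (x0 + h - x0) with h by ring. apply Rlt_le_trans with (1 := hl); apply Rmin_r.
Qed.

Lemma line_pt d f a b c : line d f a b c (coord d a b c) = f a b c.
Proof. destruct d as [|[|d]]; reflexivity. Qed.

Lemma line_local (U : R -> R -> R -> Prop) f g d a b c : open3 U -> U a b c ->
  (forall x y z, U x y z -> f x y z = g x y z) ->
  exists del, 0 < del /\ forall x, Rabs (x - coord d a b c) < del ->
    line d f a b c x = line d g a b c x.
Proof.
  intros HU Hp E. destruct (HU a b c Hp) as [del [Hdel Hn]].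
  exists del; split; auto. intros x Hx.
  assert (R0 : forall r, Rabs (r - r) < del) by (intro r; replace (r-r) with 0 by ring; rewrite Rabs_R0; lra).
  destruct d as [|[|d]]; simpl in *; apply E, Hn; auto.
Qed.

Fixpoint Dn (U : R -> R -> R -> Prop) (n : nat) (f : F3) : Prop :=
  match n with
  | O => True
  | S n => (forall a b c, U a b c -> forall d, has_pd d f a b c) /\ forall d, Dn U n (pd d f)
  end.

Definition Good U f := forall n, Dn U n f.

Lemma Dn_mono U n : forall f, Dn U (S n) f -> Dn U n f.
Proof.
  induction n; intros f H; simpl; auto.
  destruct H as [H1 H2]; split; auto.
Qed.

Lemma has_pd_local U f g d a b c : open3 U -> U a b c ->
  (forall x y z, U x y z -> f x y z = g x y z) ->
  forall l, derivable_pt_lim (line d f a b c) (coord d a b c) l ->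
  derivable_pt_lim (line d g a b c) (coord d a b c) l.
Proof.
  intros HU Hp E l H. destruct (line_local U f g d a b c HU Hp E) as [del [Hd Hl]].
  eapply dpl_local; eauto.
Qed.

Lemma Dn_ext U (HU : open3 U) n : forall f g,
  (forall x y z, U x y z -> f x y z = g x y z) -> Dn U n f -> Dn U n g.
Proof.
  induction n; intros f g E H; simpl; auto.
  destruct H as [H1 H2]; split.
  - intros a b c Hp d. destruct (H1 a b c Hp d) as [l Hl].
    exists l. eapply has_pd_local; eauto.
  - intro d. apply IHn with (pd d f); auto.
    intros x y z Hp. destruct (H1 x y z Hp d) as [l Hl].
    unfold pd. rewrite (deriv1_eq _ _ _ Hl).
    rewrite (deriv1_eq _ _ l); auto. eapply has_pd_local; eauto.
Qed.


Section Cl.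
Variable d : nat.
Variables f g : F3.
Variables a b c : R.
Hypothesis Hf : has_pd d f a b c.
Hypothesis Hg : has_pd d g a b c.

Lemma pd_plus : pd d (fun x y z => f x y z + g x y z) a b c = pd d f a b c + pd d g a b c.
Proof.
  destruct Hf as [l1 H1], Hg as [l2 H2]. unfold pd.
  rewrite (deriv1_eq _ _ _ H1), (deriv1_eq _ _ _ H2). apply deriv1_eq.
  destruct d as [|[|?]]; apply (derivable_pt_lim_plus _ _ _ _ _ H1 H2).
Qed.
Lemma has_plus : has_pd d (fun x y z => f x y z + g x y z) a b c.
Proof.
  destruct Hf as [l1 H1], Hg as [l2 H2]. exists (l1+l2).
  destruct d as [|[|?]]; apply (derivable_pt_lim_plus _ _ _ _ _ H1 H2).
Qed.
Lemma pd_minus : pd d (fun x y z => f x y z - g x y z) a b c = pd d f a b c - pd d g a b c.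
Proof.
  destruct Hf as [l1 H1], Hg as [l2 H2]. unfold pd.
  rewrite (deriv1_eq _ _ _ H1), (deriv1_eq _ _ _ H2). apply deriv1_eq.
  destruct d as [|[|?]]; apply (derivable_pt_lim_minus _ _ _ _ _ H1 H2).
Qed.
Lemma has_minus : has_pd d (fun x y z => f x y z - g x y z) a b c.
Proof.
  destruct Hf as [l1 H1], Hg as [l2 H2]. exists (l1-l2).
  destruct d as [|[|?]]; apply (derivable_pt_lim_minus _ _ _ _ _ H1 H2).
Qed.
Lemma pd_mult : pd d (fun x y z => f x y z * g x y z) a b c
   = pd d f a b c * g a b c + f a b c * pd d g a b c.
Proof.
  destruct Hf as [l1 H1], Hg as [l2 H2]. unfold pd.
  rewrite (deriv1_eq _ _ _ H1), (deriv1_eq _ _ _ H2). apply deriv1_eq.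
  destruct d as [|[|?]]; apply (derivable_pt_lim_mult _ _ _ _ _ H1 H2).
Qed.
Lemma has_mult : has_pd d (fun x y z => f x y z * g x y z) a b c.
Proof.
  destruct Hf as [l1 H1], Hg as [l2 H2]. eexists.
  destruct d as [|[|?]]; apply (derivable_pt_lim_mult _ _ _ _ _ H1 H2).
Qed.
End Cl.

Section Cl1.
Variable d : nat.
Variables f g : F3.
Variables a b c : R.
Hypothesis Hf : has_pd d f a b c.

Lemma pd_opp : pd d (fun x y z => - f x y z) a b c = - pd d f a b c.
Proof.
  destruct Hf as [l1 H1]. unfold pd.
  rewrite (deriv1_eq _ _ _ H1). apply deriv1_eq.
  destruct d as [|[|?]]; apply (derivable_pt_lim_opp _ _ _ H1).
Qed.
Lemma has_opp : has_pd d (fun x y z => - f x y z) a b c.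
Proof.
  destruct Hf as [l1 H1]. eexists.
  destruct d as [|[|?]]; apply (derivable_pt_lim_opp _ _ _ H1).
Qed.

Lemma dpl_inv (h : R -> R) x l : derivable_pt_lim h x l -> h x <> 0 ->
  derivable_pt_lim (fun y => / h y) x (- l * (/ h x * / h x)).
Proof.
  intros H Hn.
  assert (H2 := derivable_pt_lim_div (fct_cte 1) h x 0 l (derivable_pt_lim_const 1 x) H Hn).
  replace (- l * (/ h x * / h x)) with ((0 * h x - l * fct_cte 1 x) / (h x)²)
    by (unfold fct_cte, Rsqr; field; auto).
  eapply dpl_local with (del := 1); [lra| |exact H2].
  intros y _; unfold div_fct, fct_cte; simpl; unfold Rdiv; ring.
Qed.

Lemma pd_inv : f a b c <> 0 -> pd d (fun x y z => / f x y z) a b c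
   = - pd d f a b c * (/ f a b c * / f a b c).
Proof.
  intro Hn. destruct Hf as [l1 H1]. unfold pd.
  rewrite (deriv1_eq _ _ _ H1). apply deriv1_eq.
  rewrite <- (line_pt d f a b c) in Hn |- *.
  destruct d as [|[|?]]; apply (dpl_inv _ _ _ H1 Hn).
Qed.
Lemma has_inv : f a b c <> 0 -> has_pd d (fun x y z => / f x y z) a b c.
Proof.
  intro Hn. destruct Hf as [l1 H1]. eexists.
  rewrite <- (line_pt d f a b c) in Hn.
  destruct d as [|[|?]]; apply (dpl_inv _ _ _ H1 Hn).
Qed.

Lemma dpl_sqrt (h : R -> R) x l : derivable_pt_lim h x l -> 0 < h x ->
  derivable_pt_lim (fun y => sqrt (h y)) x (l * (/2 * / sqrt (h x))).
Proof.
  intros H Hn.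
  assert (H2 := derivable_pt_lim_comp h sqrt x l _ H (derivable_pt_lim_sqrt _ Hn)).
  replace (l * (/2 * / sqrt (h x))) with (/ (2 * sqrt (h x)) * l).
  - exact H2.
  - assert (0 < sqrt (h x)) by (apply sqrt_lt_R0; auto). field; lra.
Qed.

Lemma pd_sqrt : 0 < f a b c -> pd d (fun x y z => sqrt (f x y z)) a b c
   = pd d f a b c * (/2 * / sqrt (f a b c)).
Proof.
  intro Hn. destruct Hf as [l1 H1]. unfold pd.
  rewrite (deriv1_eq _ _ _ H1). apply deriv1_eq.
  rewrite <- (line_pt d f a b c) in Hn |- *.
  destruct d as [|[|?]]; apply (dpl_sqrt _ _ _ H1 Hn).
Qed.
Lemma has_sqrt : 0 < f a b c -> has_pd d (fun x y z => sqrt (f x y z)) a b c.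
Proof.
  intro Hn. destruct Hf as [l1 H1]. eexists.
  rewrite <- (line_pt d f a b c) in Hn.
  destruct d as [|[|?]]; apply (dpl_sqrt _ _ _ H1 Hn).
Qed.
End Cl1.

Lemma pd_const d k a b c : pd d (fun _ _ _ => k) a b c = 0.
Proof.
  unfold pd. apply deriv1_eq. destruct d as [|[|?]]; apply derivable_pt_lim_const.
Qed.
Lemma has_const d k a b c : has_pd d (fun _ _ _ => k) a b c.
Proof. exists 0. destruct d as [|[|?]]; apply derivable_pt_lim_const. Qed.



Section DnCl.
Variable U : R -> R -> R -> Prop.
Hypothesis HU : open3 U.

Lemma Dn_has n f a b c d : Dn U (S n) f -> U a b c -> has_pd d f a b c.
Proof. intros [H _] Hp; auto. Qed.
Lemma Dn_pd n f d : Dn U (S n) f -> Dn U n (pd d f).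
Proof. intros [_ H]; auto. Qed.

Lemma Dn_const n k : Dn U n (fun _ _ _ => k).
Proof.
  revert k; induction n; intro k; simpl; auto. split.
  - intros; apply has_const.
  - intro d. apply Dn_ext with (fun _ _ _ => 0); auto.
    intros; rewrite pd_const; auto.
Qed.

Lemma Dn_plus n : forall f g, Dn U n f -> Dn U n g -> Dn U n (fun x y z => f x y z + g x y z).
Proof.
  induction n; intros f g Hf Hg; simpl; auto. split.
  - intros a b c Hp d. apply has_plus; eapply Dn_has; eauto.
  - intro d. apply Dn_ext with (fun x y z => pd d f x y z + pd d g x y z); auto.
    + intros; rewrite pd_plus; auto; eapply Dn_has; eauto.
    + apply IHn; eapply Dn_pd; eauto.
Qed.

Lemma Dn_opp n : forall f, Dn U n f -> Dn U n (fun x y z => - f x y z).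
Proof.
  induction n; intros f Hf; simpl; auto. split.
  - intros a b c Hp d. apply has_opp; eapply Dn_has; eauto.
  - intro d. apply Dn_ext with (fun x y z => - pd d f x y z); auto.
    + intros; rewrite pd_opp; auto; eapply Dn_has; eauto.
    + apply IHn; eapply Dn_pd; eauto.
Qed.

Lemma Dn_minus n f g : Dn U n f -> Dn U n g -> Dn U n (fun x y z => f x y z - g x y z).
Proof.
  intros Hf Hg. apply Dn_ext with (fun x y z => f x y z + - g x y z); auto.
  apply Dn_plus; auto. apply Dn_opp; auto.
Qed.

Lemma Dn_mult n : forall f g, Dn U n f -> Dn U n g -> Dn U n (fun x y z => f x y z * g x y z).
Proof.
  induction n; intros f g Hf Hg; simpl; auto. split.
  - intros a b c Hp d. apply has_mult; eapply Dn_has; eauto.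
  - intro d. apply Dn_ext with (fun x y z => pd d f x y z * g x y z + f x y z * pd d g x y z); auto.
    + intros; rewrite pd_mult; auto; eapply Dn_has; eauto.
    + apply Dn_plus; apply IHn; auto using Dn_mono; eapply Dn_pd; eauto.
Qed.

Lemma Dn_inv n : forall f, (forall x y z, U x y z -> f x y z <> 0) ->
  Dn U n f -> Dn U n (fun x y z => / f x y z).
Proof.
  induction n; intros f Hn Hf; simpl; auto. split.
  - intros a b c Hp d. apply has_inv; auto; eapply Dn_has; eauto.
  - intro d. apply Dn_ext with (fun x y z => - pd d f x y z * (/ f x y z * / f x y z)); auto.
    + intros; rewrite pd_inv; auto; eapply Dn_has; eauto.
    + apply Dn_mult; [apply Dn_opp; eapply Dn_pd; eauto|].
      apply Dn_mult; apply IHn; auto using Dn_mono.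
Qed.

Lemma Dn_sqrt n : forall f, (forall x y z, U x y z -> 0 < f x y z) ->
  Dn U n f -> Dn U n (fun x y z => sqrt (f x y z)).
Proof.
  induction n; intros f Hn Hf; simpl; auto. split.
  - intros a b c Hp d. apply has_sqrt; auto; eapply Dn_has; eauto.
  - intro d. apply Dn_ext with (fun x y z => pd d f x y z * (/2 * / sqrt (f x y z))); auto.
    + intros; rewrite pd_sqrt; auto; eapply Dn_has; eauto.
    + apply Dn_mult; [eapply Dn_pd; eauto|].
      apply Dn_mult; [apply Dn_const|].
      apply Dn_inv; [|apply IHn; auto using Dn_mono].
      intros x y z Hp. assert (0 < sqrt (f x y z)) by (apply sqrt_lt_R0; auto). lra.
Qed.

Lemma Good_const k : Good U (fun _ _ _ => k).
Proof. intro; apply Dn_const. Qed.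
Lemma Good_plus f g : Good U f -> Good U g -> Good U (fun x y z => f x y z + g x y z).
Proof. intros ? ? n; apply Dn_plus; auto. Qed.
Lemma Good_minus f g : Good U f -> Good U g -> Good U (fun x y z => f x y z - g x y z).
Proof. intros ? ? n; apply Dn_minus; auto. Qed.
Lemma Good_opp f : Good U f -> Good U (fun x y z => - f x y z).
Proof. intros ? n; apply Dn_opp; auto. Qed.
Lemma Good_mult f g : Good U f -> Good U g -> Good U (fun x y z => f x y z * g x y z).
Proof. intros ? ? n; apply Dn_mult; auto. Qed.
Lemma Good_inv f : (forall x y z, U x y z -> f x y z <> 0) -> Good U f -> Good U (fun x y z => / f x y z).
Proof. intros ? ? n; apply Dn_inv; auto. Qed.
Lemma Good_div f g : (forall x y z, U x y z -> g x y z <> 0) -> Good U f -> Good U g ->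
  Good U (fun x y z => f x y z / g x y z).
Proof. intros. unfold Rdiv. apply Good_mult; auto. apply Good_inv; auto. Qed.
Lemma Good_sqrt f : (forall x y z, U x y z -> 0 < f x y z) -> Good U f -> Good U (fun x y z => sqrt (f x y z)).
Proof. intros ? ? n; apply Dn_sqrt; auto. Qed.
Lemma Good_pd d f : Good U f -> Good U (pd d f).
Proof. intros H n. exact (Dn_pd n f d (H (S n))). Qed.
Lemma Good_has d f a b c : Good U f -> U a b c -> has_pd d f a b c.
Proof. intros H Hp. exact (Dn_has 0 f a b c d (H 1%nat) Hp). Qed.

Lemma iter_app ds d f : iter_pd (ds ++ d :: nil) f = iter_pd ds (pd d f).
Proof. induction ds; simpl; auto. rewrite IHds; auto. Qed.

Lemma smooth_Good f : smooth_on U f -> Good U f.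
Proof.
  intros Hs.
  assert (H : forall ds a b c, U a b c -> forall d, has_pd d (iter_pd ds f) a b c).
  { intros ds a b c Hp d. destruct (Hs ds a b c Hp) as [_ H].
    destruct d as [|[|d]]; [apply H; auto|apply H; auto|].
    apply (H 2%nat); auto. }
  intro n. revert f Hs H. induction n; intros f Hs H; simpl; auto. split.
  - intros; apply (H nil); auto.
  - intro d. apply IHn.
    + intros ds a b c Hp. rewrite <- iter_app. apply Hs; auto.
    + intros ds. rewrite <- iter_app. apply H.
Qed.
End DnCl.


Section Geo.
Variable U : R -> R -> R -> Prop.
Hypothesis HU : open3 U.
Variable X : nat -> F3.
Hypothesis GX : forall i, (i < 3)%nat -> Good U (X i).
Hypothesis Hnz : forall a b c, U a b c -> sum3 (fun j => crossS X j a b c ^ 2) <> 0.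

Ltac specific := fail.
Ltac good := repeat (first [ specific | apply (Good_plus U HU) | apply (Good_minus U HU) | apply (Good_mult U HU)
  | apply (Good_opp U HU) | apply (Good_const U HU) | apply (Good_pd U) | (apply GX; lia) ]).

Lemma Good_Sv al i : (i < 3)%nat -> Good U (Sv X al i).
Proof. intro; unfold Sv; apply (Good_pd U); auto. Qed.

Lemma Good_met al be : Good U (met X al be).
Proof. unfold met, sum3. good. Qed.

Lemma metdet_eq a b c : metdet X a b c = sum3 (fun j => crossS X j a b c ^ 2).
Proof. unfold metdet, met, sum3, crossS, cross. simpl. ring. Qed.

Lemma metdet_nz a b c : U a b c -> metdet X a b c <> 0.
Proof. intro; rewrite metdet_eq; auto. Qed.

Lemma Good_metdet : Good U (metdet X).
Proof. unfold metdet. good; apply Good_met. Qed.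

Lemma Good_imet al be : Good U (imet X al be).
Proof.
  unfold imet. apply (Good_div U HU); [apply metdet_nz| |apply Good_metdet].
  destruct (Nat.eqb al be); [apply Good_met|apply (Good_opp U HU), Good_met].
Qed.

Ltac specific ::= first [apply Good_imet | apply Good_metdet | apply Good_met].

Lemma Good_Sup al i : (i < 3)%nat -> Good U (Sup X al i).
Proof. intro; unfold Sup, sum2. good. Qed.
Ltac specific ::= first [apply Good_imet | apply Good_metdet | apply Good_met | (apply Good_Sup; lia)].

Lemma Good_Chr ga al be : Good U (Chr X ga al be).
Proof. unfold Chr, sum3. good. Qed.

Lemma Good_crossS i : Good U (crossS X i).
Proof. unfold crossS, cross. destruct i as [|[|i]]; good. Qed.

Lemma sum3_pos x y z : U x y z -> 0 < sum3 (fun j => crossS X j x y z ^ 2).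
Proof.
  intro Hp. specialize (Hnz x y z Hp). unfold sum3 in *.
  assert (0 <= crossS X 0 x y z ^ 2) by (apply pow2_ge_0).
  assert (0 <= crossS X 1 x y z ^ 2) by (apply pow2_ge_0).
  assert (0 <= crossS X 2 x y z ^ 2) by (apply pow2_ge_0). lra.
Qed.

Lemma Good_Nv i : Good U (Nv X i).
Proof.
  unfold Nv. apply (Good_div U HU); [| apply Good_crossS |].
  - intros x y z Hp. assert (0 < sqrt (sum3 (fun j => crossS X j x y z ^ 2))); [|lra].
    apply sqrt_lt_R0. apply sum3_pos; auto.
  - apply (Good_sqrt U HU).
    + apply sum3_pos.
    + unfold sum3. simpl. good; apply Good_crossS.
Qed.
Ltac specific ::= first [apply Good_imet | apply Good_metdet | apply Good_met | (apply Good_Sup; lia)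
  | apply Good_Chr | apply Good_Nv].

Lemma Good_Cn : Good U (Cn X).
Proof. unfold Cn, Vel, sum3. good. Qed.

Lemma Good_Vup al : Good U (Vup X al).
Proof. unfold Vup, Vel, sum3. good. Qed.

Lemma Good_Bmix al be : Good U (Bmix X al be).
Proof. unfold Bmix, sum3. good. Qed.
Ltac specific ::= first [apply Good_imet | apply Good_metdet | apply Good_met | (apply Good_Sup; lia)
  | apply Good_Chr | apply Good_Nv | apply Good_Cn | apply Good_Vup | apply Good_Bmix].

Lemma Good_covU w al be : (forall j, (j < 2)%nat -> Good U (w j)) -> (be < 2)%nat ->
  Good U (covU X w al be).
Proof. intros Hw Hb. unfold covU, sum2. good; apply Hw; lia. Qed.

Lemma Good_dotChr al be : Good U (dotChr X al be).
Proof. unfold dotChr, covU, sum2. good. Qed.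
End Geo.

Module SchwarzM.
Import Coquelicot.Coquelicot.

Lemma deriv1_Derive g x l : derivable_pt_lim g x l -> Derive g x = deriv1 g x.
Proof.
  intro H. rewrite (deriv1_eq _ _ _ H). apply is_derive_unique. apply is_derive_Reals; auto.
Qed.

Lemma loc_ball (u r : R) (P : R -> Prop) : 0 < r -> (forall z, Rabs (z - u) < r -> P z) -> locally u P.
Proof. intros Hr H. exists (mkposreal r Hr). intros z Hz. apply H. exact Hz. Qed.

Lemma schwarz2 (g : R -> R -> R) x y del : 0 < del ->
  (forall u v, Rabs (u - x) < del -> Rabs (v - y) < del ->
    (exists l, derivable_pt_lim (fun z => g z v) u l) /\
    (exists l, derivable_pt_lim (fun t => g u t) v l) /\
    (exists l, derivable_pt_lim (fun z => deriv1 (fun t => g z t) v) u l) /\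
    (exists l, derivable_pt_lim (fun t => deriv1 (fun z => g z t) u) v l)) ->
  (forall eps, 0 < eps -> exists d, 0 < d /\ forall u v, Rabs (u - x) < d -> Rabs (v - y) < d ->
     Rabs (deriv1 (fun z => deriv1 (fun t => g z t) v) u - deriv1 (fun z => deriv1 (fun t => g z t) y) x) < eps) ->
  (forall eps, 0 < eps -> exists d, 0 < d /\ forall u v, Rabs (u - x) < d -> Rabs (v - y) < d ->
     Rabs (deriv1 (fun t => deriv1 (fun z => g z t) u) v - deriv1 (fun t => deriv1 (fun z => g z t) x) y) < eps) ->
  deriv1 (fun z => deriv1 (fun t => g z t) y) x = deriv1 (fun t => deriv1 (fun z => g z t) x) y.
Proof.
  intros Hdel H Hc1 Hc2.
  assert (EA : forall u v, Rabs (u - x) < del -> Rabs (v - y) < del ->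
    Derive (fun z => Derive (fun t => g z t) v) u = deriv1 (fun z => deriv1 (fun t => g z t) v) u
    /\ ex_derive (fun z => Derive (fun t => g z t) v) u).
  { intros u v Hu Hv. destruct (H u v Hu Hv) as [_ [_ [[l Hl] _]]].
    assert (Loc : locally u (fun z => deriv1 (fun t => g z t) v = Derive (fun t => g z t) v)).
    { apply loc_ball with (del - Rabs (u - x)); [lra|]. intros z Hz.
      assert (Hzx : Rabs (z - x) < del).
      { replace (z - x) with ((z - u) + (u - x)) by ring.
        eapply Rle_lt_trans; [apply Rabs_triang|lra]. }
      destruct (H z v Hzx Hv) as [_ [[l2 Hl2] _]]. symmetry; eapply deriv1_Derive; eauto. }
    split.
    - rewrite <- (deriv1_Derive _ _ _ Hl). apply Derive_ext_loc.
      eapply filter_imp; [|exact Loc]. intros z Hz; simpl; auto.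
    - apply ex_derive_ext_loc with (fun z => deriv1 (fun t => g z t) v); auto.
      exists l. apply is_derive_Reals; auto. }
  assert (EB : forall u v, Rabs (u - x) < del -> Rabs (v - y) < del ->
    Derive (fun t => Derive (fun z => g z t) u) v = deriv1 (fun t => deriv1 (fun z => g z t) u) v
    /\ ex_derive (fun t => Derive (fun z => g z t) u) v).
  { intros u v Hu Hv. destruct (H u v Hu Hv) as [_ [_ [_ [l Hl]]]].
    assert (Loc : locally v (fun t => deriv1 (fun z => g z t) u = Derive (fun z => g z t) u)).
    { apply loc_ball with (del - Rabs (v - y)); [lra|]. intros t Ht.
      assert (Hty : Rabs (t - y) < del).
      { replace (t - y) with ((t - v) + (v - y)) by ring.
        eapply Rle_lt_trans; [apply Rabs_triang|lra]. }
      destruct (H u t Hu Hty) as [[l2 Hl2] _]. symmetry; eapply deriv1_Derive; eauto. }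
    split.
    - rewrite <- (deriv1_Derive _ _ _ Hl). apply Derive_ext_loc.
      eapply filter_imp; [|exact Loc]. intros z Hz; simpl; auto.
    - apply ex_derive_ext_loc with (fun t => deriv1 (fun z => g z t) u); auto.
      exists l. apply is_derive_Reals; auto. }
  assert (R0 : Rabs (x - x) < del) by (replace (x-x) with 0 by ring; rewrite Rabs_R0; lra).
  assert (R1 : Rabs (y - y) < del) by (replace (y-y) with 0 by ring; rewrite Rabs_R0; lra).
  rewrite <- (proj1 (EA x y R0 R1)), <- (proj1 (EB x y R0 R1)).
  apply Schwarz.
  - exists (mkposreal del Hdel). intros u v Hu Hv. simpl in Hu, Hv.
    destruct (H u v Hu Hv) as [[l1 H1] [[l2 H2] _]].
    split; [exists l1; apply is_derive_Reals; auto|].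
    split; [exists l2; apply is_derive_Reals; auto|].
    split; [apply (proj2 (EA u v Hu Hv))|apply (proj2 (EB u v Hu Hv))].
  - intro eps. destruct (Hc1 eps (cond_pos eps)) as [d [Hd Hc]].
    assert (Hm : 0 < Rmin d del) by (apply Rmin_pos; lra).
    exists (mkposreal _ Hm). intros u v Hu Hv. simpl in Hu, Hv.
    assert (Hu1 : Rabs (u - x) < d) by (eapply Rlt_le_trans; [exact Hu|apply Rmin_l]).
    assert (Hu2 : Rabs (u - x) < del) by (eapply Rlt_le_trans; [exact Hu|apply Rmin_r]).
    assert (Hv1 : Rabs (v - y) < d) by (eapply Rlt_le_trans; [exact Hv|apply Rmin_l]).
    assert (Hv2 : Rabs (v - y) < del) by (eapply Rlt_le_trans; [exact Hv|apply Rmin_r]).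
    rewrite (proj1 (EA u v Hu2 Hv2)), (proj1 (EA x y R0 R1)). apply Hc; auto.
  - intro eps. destruct (Hc2 eps (cond_pos eps)) as [d [Hd Hc]].
    assert (Hm : 0 < Rmin d del) by (apply Rmin_pos; lra).
    exists (mkposreal _ Hm). intros u v Hu Hv. simpl in Hu, Hv.
    assert (Hu1 : Rabs (u - x) < d) by (eapply Rlt_le_trans; [exact Hu|apply Rmin_l]).
    assert (Hu2 : Rabs (u - x) < del) by (eapply Rlt_le_trans; [exact Hu|apply Rmin_r]).
    assert (Hv1 : Rabs (v - y) < d) by (eapply Rlt_le_trans; [exact Hv|apply Rmin_l]).
    assert (Hv2 : Rabs (v - y) < del) by (eapply Rlt_le_trans; [exact Hv|apply Rmin_r]).
    rewrite (proj1 (EB u v Hu2 Hv2)), (proj1 (EB x y R0 R1)). apply Hc; auto.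
Qed.

End SchwarzM.
Import SchwarzM.

Lemma rabs0 r del : 0 < del -> Rabs (r - r) < del.
Proof. intro; replace (r-r) with 0 by ring; rewrite Rabs_R0; lra. Qed.

Ltac mixed_tac U Hs HU Hp d1 d2 :=
  destruct (HU _ _ _ Hp) as [del [Hdl0 Hn0]];
  refine (schwarz2 _ _ _ del Hdl0 _ _ _);
  [ intros u v Hu Hv;
    assert (Hq : U _ _ _) by (apply Hn0; first [exact Hu | exact Hv | apply rabs0; exact Hdl0]);
    destruct (Hs nil _ _ _ Hq) as [_ HH0];
    destruct (Hs (cons d2 nil) _ _ _ Hq) as [_ HH1];
    destruct (Hs (cons d1 nil) _ _ _ Hq) as [_ HH2];
    split; [exact (HH0 d1 ltac:(auto))|];
    split; [exact (HH0 d2 ltac:(auto))|];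
    split; [exact (HH1 d1 ltac:(auto))|exact (HH2 d2 ltac:(auto))]
  | intros eps Heps;
    destruct (proj1 (Hs (cons d1 (cons d2 nil)) _ _ _ Hp) eps Heps) as [dl [Hdl Hc]];
    exists dl; split; [exact Hdl|]; intros u v Hu Hv;
    apply Hc; first [exact Hu | exact Hv | apply rabs0; exact Hdl]
  | intros eps Heps;
    destruct (proj1 (Hs (cons d2 (cons d1 nil)) _ _ _ Hp) eps Heps) as [dl [Hdl Hc]];
    exists dl; split; [exact Hdl|]; intros u v Hu Hv;
    apply Hc; first [exact Hu | exact Hv | apply rabs0; exact Hdl] ].

Lemma mixed U f a b c d e : open3 U -> smooth_on U f -> U a b c -> (d < 3)%nat -> (e < 3)%nat ->
  pd d (pd e f) a b c = pd e (pd d f) a b c.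
Proof.
  intros HU Hs Hp Hd He.
  destruct d as [|[|[|d]]]; destruct e as [|[|[|e]]]; try reflexivity; try lia.
  - change (deriv1 (fun z => deriv1 (fun t => (fun u v => f u v c) z t) b) a
      = deriv1 (fun t => deriv1 (fun z => (fun u v => f u v c) z t) a) b);
    mixed_tac U Hs HU Hp 0%nat 1%nat.
  - change (deriv1 (fun z => deriv1 (fun t => (fun u v => f u b v) z t) c) a
      = deriv1 (fun t => deriv1 (fun z => (fun u v => f u b v) z t) a) c);
    mixed_tac U Hs HU Hp 0%nat 2%nat.
  - symmetry; change (deriv1 (fun z => deriv1 (fun t => (fun u v => f u v c) z t) b) a
      = deriv1 (fun t => deriv1 (fun z => (fun u v => f u v c) z t) a) b);
    mixed_tac U Hs HU Hp 0%nat 1%nat.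
  - change (deriv1 (fun z => deriv1 (fun t => (fun u v => f a u v) z t) c) b
      = deriv1 (fun t => deriv1 (fun z => (fun u v => f a u v) z t) b) c);
    mixed_tac U Hs HU Hp 1%nat 2%nat.
  - symmetry; change (deriv1 (fun z => deriv1 (fun t => (fun u v => f u b v) z t) c) a
      = deriv1 (fun t => deriv1 (fun z => (fun u v => f u b v) z t) a) c);
    mixed_tac U Hs HU Hp 0%nat 2%nat.
  - symmetry; change (deriv1 (fun z => deriv1 (fun t => (fun u v => f a u v) z t) c) b
      = deriv1 (fun t => deriv1 (fun z => (fun u v => f a u v) z t) b) c);
    mixed_tac U Hs HU Hp 1%nat 2%nat.
Qed.


Lemma Chr_sym U X a b c i j k : open3 U -> (forall i, (i < 3)%nat -> smooth_on U (X i)) -> U a b c ->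
  (j < 3)%nat -> (k < 3)%nat -> Chr X i j k a b c = Chr X i k j a b c.
Proof.
  intros HU HX Hp Hj Hk. unfold Chr, Sv, sum3.
  rewrite (mixed U (X 0%nat) a b c j k), (mixed U (X 1%nat) a b c j k), (mixed U (X 2%nat) a b c j k);
    auto.
Qed.

Ltac goodm U GC GV GD GP HU := repeat (first [apply GC | apply GV | apply GD | (apply GP; lia)
     | apply (Good_pd U) | apply (Good_minus U HU) | apply (Good_plus U HU)
     | apply (Good_mult U HU) | apply (Good_opp U HU) ]).
Ltac hastac U GC GV GD GP HU Hp := apply (Good_has U); [goodm U GC GV GD GP HU | exact Hp].

Theorem mainTheorem1
  (U : R -> R -> R -> Prop) (X : nat -> F3) (psi : nat -> F3) :
  open3 U ->
  (forall i, (i < 3)%nat -> smooth_on U (X i)) ->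
  (forall a b c, U a b c -> sum3 (fun j => crossS X j a b c ^ 2) <> 0) ->
  (forall be, (be < 2)%nat -> smooth_on U (psi be)) ->
  forall (al be : nat) (a b c : R), (al < 2)%nat -> (be < 2)%nat -> U a b c ->
    dotnab11 X (nablaPsi X psi) be al a b c - covU X (dotnabU X psi) al be a b c
    = sum2 (fun ga => dotR X be al ga a b c * psi ga a b c)
      + Cn X a b c * sum2 (fun ga => Bmix X ga al a b c * covU X psi ga be a b c).
Proof.
  intros HU HXs Hnz Hpsis al be a b c Hal Hbe Hp.
  assert (GX : forall i, (i < 3)%nat -> Good U (X i)) by (intros; apply smooth_Good; auto).
  assert (GP : forall i, (i < 2)%nat -> Good U (psi i)) by (intros; apply smooth_Good; auto).
  unfold dotnab11, nablaPsi, dotnabU, dotR, cov11, covU, Riem, sum2.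
  pose proof (Good_Chr U HU X GX Hnz) as GC.
  pose proof (Good_Vup U HU X GX Hnz) as GV.
  pose proof (Good_dotChr U HU X GX Hnz) as GD.
  with_strategy opaque [Chr Vup dotChr] (repeat (first [rewrite pd_plus by hastac U GC GV GD GP HU Hp
               | rewrite pd_minus by hastac U GC GV GD GP HU Hp
               | rewrite pd_mult by hastac U GC GV GD GP HU Hp])).
  rewrite (mixed U (psi be) a b c al 2), (mixed U (psi be) a b c al 0), (mixed U (psi be) a b c al 1)
    by (auto; lia).
  rewrite (Chr_sym U X a b c 0 0 al), (Chr_sym U X a b c 1 0 al), (Chr_sym U X a b c 0 1 al),
    (Chr_sym U X a b c 1 1 al) by (auto; lia).
  unfold dotChr, covU, sum2.
  ring.
Qed.
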